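(* Let $1\le l\le r$ and consider a canonical noiseless MMV model $B=AX$ in which $A$ satisfies $0\le \delta^L_{2k-r+l}(A)<1$ and the nonzero rows of $X$ are in general position. Let $I\subset\{1,\dots,n\}$ be an index set with $|I|\le \min(2(k-r)+l,\,k)$ and $|I\setminus \operatorname{supp}X|\le k-r+l$. Then the following are equivalent: (i) $|I\cap \operatorname{supp}X|\ge k-r+1$; (ii) $\operatorname{rank}[A_I~B]<|I|+r$.
   Context: Canonical MMV setting: $m,n,r,k$ are positive integers with $r\le m<n$ and $r\le k$. $A\in\mathbb{R}^{m\times n}$ is the sensing matrix with columns $\mathbf a_1,\dots,\mathbf a_n$; $X\in\mathbb{R}^{n\times r}$ has rows $\mathbf x^1,\dots,\mathbf x^n$, $\operatorname{supp}X=\{i:\mathbf x^i\neq 0\}$ and $|\operatorname{supp}X|=k$; $B=AX\in\mathbb{R}^{m\times r}$ has full column rank $r$. For an index set $I$, $A_I$ is the submatrix of $A$ formed by the columns indexed by $I$, and $[A_I~B]$ denotes horizontal concatenation. The lower restricted isometry constant $\delta^L_s(A)$ is the smallest $\delta\ge0$ such that $(1-\delta)\|\mathbf x\|_2^2\le\|A\mathbf x\|_2^2$ for all $\mathbf x\in\mathbb{R}^n$ with at most $s$ nonzero entries; thus $\delta^L_s(A)<1$ means every $s$ columns of $A$ are linearly independent. ''The nonzero rows of $X$ are in general position'' means any $r$ of the $k$ nonzero rows of $X$ (vectors in $\mathbb{R}^r$) are linearly independent. *)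

(* Defs.v *)
From HB Require Import structures.
From mathcomp Require Import all_boot all_order all_algebra.
Set Implicit Arguments. Unset Strict Implicit. Unset Printing Implicit Defensive.
Import Order.TTheory GRing.Theory Num.Theory.
Local Open Scope ring_scope.

Definition sqnorm (R : realFieldType) (p : nat) (v : 'cV[R]_p) : R :=
  \sum_(i < p) v i 0 ^+ 2.

Definition nnz (R : realFieldType) (p : nat) (v : 'cV[R]_p) : nat :=
  #|[set i : 'I_p | v i 0 != 0]|.

Definition lower_rip_ok (R : realFieldType) (m n s : nat) (A : 'M[R]_(m, n)) (d : R) :=
  0 <= d /\ forall x : 'cV[R]_n, (nnz x <= s)%N -> (1 - d) * sqnorm x <= sqnorm (A *m x).

(* delta^L_s(A) < 1 : the smallest admissible delta is < 1, i.e. some admissible delta < 1 *)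
Definition lower_ric_lt1 (R : realFieldType) (m n s : nat) (A : 'M[R]_(m, n)) : Prop :=
  exists d : R, lower_rip_ok s A d /\ d < 1.

Definition rsupp (R : realFieldType) (n r : nat) (X : 'M[R]_(n, r)) : {set 'I_n} :=
  [set i : 'I_n | row i X != 0].

Definition rows_general_position (R : realFieldType) (n r : nat) (X : 'M[R]_(n, r)) : Prop :=
  forall S : {set 'I_n}, S \subset rsupp X -> #|S| = r ->
    free [seq row i X | i <- enum S].

Definition colsI (R : realFieldType) (m n : nat) (A : 'M[R]_(m, n)) (I : {set 'I_n})
  : 'M[R]_(m, #|I|) := colsub (@enum_val _ (mem I)) A.

(* Main.v *)
Require Import Defs.
From HB Require Import structures.
From mathcomp Require Import all_boot all_order all_algebra zify.
Set Implicit Arguments. Unset Strict Implicit. Unset Printing Implicit Defensive.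
Import Order.TTheory GRing.Theory Num.Theory.
Local Open Scope ring_scope.

Lemma sqnorm_eq0 (R : realFieldType) p (x : 'cV[R]_p) : sqnorm x <= 0 -> x = 0.
Proof.
move=> H; have H0 : sqnorm x = 0.
  by apply/eqP; rewrite eq_le H sumr_ge0 // => i _; rewrite sqr_ge0.
apply/matrixP => i j; rewrite !ord1 mxE.
have := @psumr_eq0P _ _ xpredT (fun i => x i 0 ^+ 2) (fun i _ => sqr_ge0 _) H0 i isT.
by move/eqP; rewrite sqrf_eq0 => /eqP.
Qed.

Lemma rip_inj (R : realFieldType) m n s (A : 'M[R]_(m, n)) (x : 'cV[R]_n) :
  lower_ric_lt1 s A -> (nnz x <= s)%N -> A *m x = 0 -> x = 0.
Proof.
move=> [d [[d0 Hd] d1]] Hx Ax; apply: sqnorm_eq0.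
have := Hd x Hx; rewrite Ax.
have -> : sqnorm (0 : 'cV[R]_m) = 0 by rewrite /sqnorm big1 // => i _; rewrite mxE expr0n.
by rewrite pmulr_rle0 // subr_gt0.
Qed.
Lemma self_orth0 (R : realFieldType) r (b : 'rV[R]_r) : b *m b^T = 0 -> b = 0.
Proof.
move=> H; apply/rowP => c; rewrite mxE.
have := congr1 (fun M : 'M_1 => M 0 0) H; rewrite !mxE => /eqP.
under eq_bigr do rewrite mxE.
move/eqP/psumr_eq0P => /(_ (fun i _ => sqr_ge0 (b 0 i))) /(_ c isT) /eqP.
by rewrite mulf_eq0 orbb => /eqP.
Qed.

Lemma orth_free (R : realFieldType) r (s : seq 'rV[R]_r) (b : 'rV[R]_r) :
  free s -> size s = r -> (forall v, v \in s -> v *m b^T = 0) -> b = 0.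
Proof.
move=> fs ss orth; apply: self_orth0.
have Hs : (<<s>> = fullv)%VS.
  apply/eqP; rewrite eqEdim subvf dimvf /= (eqnP fs) ss.
  by rewrite dim_matrix mul1r.
have := memvf b; rewrite -Hs => bs.
rewrite {1}(@coord_span _ _ _ (in_tuple s) b bs).
rewrite mulmx_suml big1 // => i _.
rewrite -scalemxAl orth ?scaler0 //.
exact: mem_nth (ltn_ord i).
Qed.
Lemma rank_supp (R : fieldType) n p (T : {set 'I_n}) (N : 'M[R]_(n,p)) :
  (forall j c, j \notin T -> N j c = 0) -> (\rank N <= #|T|)%N.
Proof.
move=> HN; set g := @enum_val _ (mem T).
have -> : N = colsub g (1%:M : 'M[R]_n) *m rowsub g N.
  apply/matrixP => i c; rewrite !mxE.
  under eq_bigr do rewrite !mxE.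
  case: (boolP (i \in T)) => Hi.
    rewrite (bigD1 (enum_rank_in Hi i)) //= /g enum_rankK_in // eqxx mul1r.
    rewrite big1 ?addr0 // => t Ht; case: eqP; rewrite ?mul0r // => Ei.
    suff E2 : enum_rank_in Hi i = t by rewrite E2 eqxx in Ht.
    by apply: enum_val_inj; rewrite enum_rankK_in.
  rewrite HN // big1 // => t _; case: eqP; rewrite ?mul0r // => Ei.
  by move: Hi; rewrite Ei /g enum_valP.
exact: leq_trans (mxrankM_maxl _ _) (rank_leq_col _).
Qed.

Theorem theorem1 (R : realFieldType) (m n r k l : nat)
  (A : 'M[R]_(m, n)) (X : 'M[R]_(n, r)) (I : {set 'I_n}) :
  (0 < m)%N -> (0 < n)%N -> (0 < r)%N -> (0 < k)%N ->
  (r <= m)%N -> (m < n)%N -> (r <= k)%N ->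
  #|rsupp X| = k ->
  \rank (A *m X) = r ->
  (1 <= l)%N -> (l <= r)%N ->
  lower_ric_lt1 (2 * k - r + l) A ->
  rows_general_position X ->
  (#|I| <= minn (2 * (k - r) + l) k)%N ->
  (#|I :\: rsupp X| <= k - r + l)%N ->
  ((k - r + 1 <= #|I :&: rsupp X|)%N <->
   (\rank (row_mx (colsI A I) (A *m X)) < #|I| + r)%N).
Proof.
move=> _ _ _ _ _ _ rk cS _ _ _ rip gp _ cID.
set S := rsupp X in cS cID *.
set f := @enum_val _ (mem I).
set E := colsub f (1%:M : 'M[R]_n).
set M := row_mx E X.
have hM : row_mx (colsI A I) (A *m X) = A *m M.
  by rewrite /M mul_mx_row /colsI /E mulmx_colsub mulmx1.
have Erow : forall j c, j \notin I -> E j c = 0.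
  move=> j c Hj; rewrite !mxE; case: eqP => // Ej.
  by move: Hj; rewrite Ej /f enum_valP.
have Xrow : forall j c, j \notin S -> X j c = 0.
  move=> j c; rewrite inE negbK => /eqP H.
  by have := congr1 (fun v : 'rV_r => v 0 c) H; rewrite !mxE.
have Mrow : forall j c, j \notin I :|: S -> M j c = 0.
  move=> j c; rewrite in_setU negb_or => /andP[jI jS].
  rewrite -[c]splitK; case: (split c) => c' /=.
    by rewrite row_mxEl Erow.
  by rewrite row_mxEr Xrow.
have cU := cardsU I S.
have cIS := cardsID S I.
have cSI := cardsID I S.
rewrite setIC in cSI.
have rankAM : \rank (A *m M) = \rank M.
  rewrite -mxrank_tr trmx_mul -(mxrank_tr M).
  have := mxrank_mul_ker M^T A^T.
  suff -> : (M^T :&: kermx A^T)%MS = 0 by rewrite mxrank0 addn0.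
  apply/row_matrixP => i; rewrite row0.
  set v := row i _.
  have v1 : (v <= M^T)%MS := submx_trans (row_sub i _) (capmxSl _ _).
  have v2 : (v <= kermx A^T)%MS := submx_trans (row_sub i _) (capmxSr _ _).
  move/sub_kermxP: v2 => vA.
  case/submxP: v1 => u vu.
  have : v^T = 0.
    apply: (rip_inj rip).
      apply: (leq_trans _ (_ : #|I :|: S| <= _)%N); last by lia.
      apply: subset_leq_card; apply/subsetP => j; rewrite inE; apply: contraR => Hj.
      rewrite mxE vu mxE big1 // => c _; by rewrite mxE Mrow // mulr0.
    by rewrite -[A]trmxK -trmx_mul vA trmx0.
  by move/(congr1 trmx); rewrite trmxK trmx0.
rewrite hM rankAM.
have key : (\rank M < #|I| + r)%N <-> (#|S :\: I| < r)%N.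
  split; last first.
    move=> H; have := rank_supp Mrow; lia.
  apply: contraLR; rewrite -!leqNgt => H.
  have : row_free M^T.
    rewrite -kermx_eq0; apply/eqP/row_matrixP => i; rewrite row0.
    set w := row i (kermx M^T).
    have wM : w *m M^T = 0 by apply/sub_kermxP; exact: row_sub.
    rewrite -[w]hsubmxK in wM *.
    set a := lsubmx w in wM *; set b := rsubmx w in wM *.
    rewrite /M tr_row_mx mul_row_col in wM.
    have b0 : b = 0.
      set s := take r (enum (S :\: I)).
      have us : uniq s by rewrite take_uniq // enum_uniq.
      have ss : size s = r by rewrite size_takel // -cardE.
      have cR : #|[set x in s]| = r by rewrite cardsE (card_uniqP us).
      have sR : [set x in s] \subset S.
        apply/subsetP => x; rewrite inE => /mem_take; rewrite mem_enum in_setD.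
        by case/andP.
      apply: (orth_free (gp _ sR cR)); first by rewrite size_map -cardE.
      move=> v /mapP [j]; rewrite mem_enum inE => /mem_take; rewrite mem_enum => jSI ->.
      have eb : (b *m X^T) 0 j = 0.
        have := congr1 (fun z : 'rV_n => z 0 j) wM; rewrite !mxE.
        rewrite big1 ?add0r // => c _.
        rewrite (_ : E^T c j = 0) ?mulr0 //; rewrite mxE Erow //.
        by move: jSI; rewrite in_setD => /andP[].
      apply/matrixP => x y; rewrite !ord1; transitivity ((b *m X^T) 0 j); last by rewrite eb mxE.
      by rewrite !mxE; apply: eq_bigr => c _; rewrite !mxE mulrC.
    have a0 : a = 0.
      rewrite b0 mul0mx addr0 in wM.
      apply/rowP => c.
      have := congr1 (fun z : 'rV_n => z 0 (f c)) wM; rewrite !mxE.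
      rewrite (bigD1 c) //= big1 ?addr0.
        by rewrite !mxE eqxx mulr1.
      move=> c' Hc'; rewrite !mxE.
      case: eqP; rewrite ?mulr0 // => /enum_val_inj Ec.
      by rewrite Ec eqxx in Hc'.
    by rewrite a0 b0 row_mx0.
  by rewrite /row_free mxrank_tr => /eqP ->.
rewrite key; lia.
Qed.
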